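(* Let $\mathcal A$ be finite, $r,\hat r:\mathcal A\to[0,1]$, $\eta>0$, and $\pi^{\mathrm{ref}}\in\Delta(\mathcal A)$ with $\pi^{\mathrm{ref}}(a)>0$ for all $a$. Suppose $\hat\pi\in\arg\max_{\pi\in\Delta(\mathcal A)}J(\pi;\hat r)$. Then there exists $\bar u\in[0,1]$ such that $$\mathrm{SubOpt}(\hat\pi)=\frac\eta2\left(\mathbb E_{a\sim\pi_{\bar u}}\Big[\frac{\pi_{\bar u}(a)}{\pi^{\mathrm{ref}}(a)}(r(a)-\hat r(a))^2\Big]-\frac{\Big(\sum_a\frac{\pi_{\bar u}(a)^2}{\pi^{\mathrm{ref}}(a)}(r(a)-\hat r(a))\Big)^2}{\sum_a\frac{\pi_{\bar u}(a)^2}{\pi^{\mathrm{ref}}(a)}}\right),$$ where $\pi_{\bar u}$ is the maximizer of $J(\cdot;r_{\bar u})$ over $\Delta(\mathcal A)$ with $r_{\bar u}=(1-\bar u)r+\bar u\hat r$. In particular, $$\mathrm{SubOpt}(\hat\pi)\le\frac\eta2\,\mathbb E_{a\sim\pi_{\bar u}}\Big[\frac{\pi_{\bar u}(a)}{\pi^{\mathrm{ref}}(a)}(r(a)-\hat r(a))^2\Big].$$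
   Context: For $f:\mathcal A\to\mathbb R$, $J(\pi;f)=\sum_af(a)\pi(a)-\eta^{-1}\mathrm{KL}(\pi^{\mathrm{ref}}\|\pi)$, where $\mathrm{KL}(P\|Q)=\sum_aP(a)\log(P(a)/Q(a))$. $\pi^*$ is the (unique) maximizer of $J(\cdot;r)$ over $\Delta(\mathcal A)$, and $\mathrm{SubOpt}(\pi)=J(\pi^*;r)-J(\pi;r)$. *)

(* Defs.v *)
From HB Require Import structures.
From mathcomp Require Import all_boot all_order all_algebra.
From mathcomp Require Import all_classical all_reals all_analysis.
Set Implicit Arguments. Unset Strict Implicit. Unset Printing Implicit Defensive.
Import Order.TTheory GRing.Theory Num.Theory.
Local Open Scope ring_scope.
Local Open Scope ereal_scope.

Section Defs.
Context {R : realType} {A : finType}.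

Definition simplex (p : A -> R) : Prop :=
  (forall a, (0 <= p a)%R) /\ (\sum_a p a)%R = 1%R.

(* KL(P || Q) = sum_a P a log(P a / Q a), with 0 log(0/q) = 0, and +oo when
   P a > 0 = Q a for some a. *)
Definition KL (P Q : A -> R) : \bar R :=
  if [forall a, (0 < P a)%R ==> (0 < Q a)%R]
  then (\sum_a P a * ln (P a / Q a))%:E
  else +oo.

Definition J (pref : A -> R) (eta : R) (f : A -> R) (pi : A -> R) : \bar R :=
  (\sum_a f a * pi a)%:E - (eta^-1)%:E * KL pref pi.

Definition is_maximizer (pref : A -> R) (eta : R) (f : A -> R) (pi : A -> R) : Prop :=
  simplex pi /\ forall p, simplex p -> J pref eta f p <= J pref eta f pi.

End Defs.

(* Main.v *)
Require Import Defs.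
From HB Require Import structures.
From mathcomp Require Import all_boot all_order all_algebra.
From mathcomp Require Import all_classical all_reals all_analysis.
From mathcomp Require Import ring lra.
Import Order.TTheory GRing.Theory Num.Theory.
Import numFieldNormedType.Exports.
Local Open Scope ring_scope.
Local Open Scope classical_set_scope.

Section S.
Variables (R : realType) (A : finType) (r rhat pref : A -> R) (eta : R).
Hypotheses (eta0 : 0 < eta) (pref0 : forall a, 0 < pref a)
  (pref1 : \sum_a pref a = 1).

Definition cc (u : R) a := (1 - u) * r a + u * rhat a.
Definition dl a := rhat a - r a.
Lemma ccE u v a : cc v a - cc u a = (v - u) * dl a.
Proof. rewrite /cc /dl; ring. Qed.

Definition Fs u l := \sum_a pref a / (l - cc u a).

Lemma inhA : exists a : A, True.
Proof.
case: (pickP (fun _ : A => true)) => [a0 _ | h]; first by exists a0.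
exfalso; have h0 : \sum_a pref a = 0 by apply: big_pred0 => i; exact: h.
by move: pref1; rewrite h0 => /eqP; rewrite eq_sym oner_eq0.
Qed.

Lemma Fs_cont u l : (forall a, cc u a < l) -> {for l, continuous (Fs u)}.
Proof.
move=> hl; rewrite /Fs.
apply: (@cvg_big _ _ +%R 0 predT _ _ (nbhs l) _ (fun a l => pref a / (l - cc u a))).
- exact: add_continuous.
move=> a _; apply: cvgM; first exact: cvg_cst.
apply: cvgV; first by rewrite subr_eq0 gt_eqF.
by apply: cvgB; [exact: cvg_id| exact: cvg_cst].
Qed.

Lemma ex_lam u : exists l, (forall a, cc u a < l) /\ Fs u l = eta.
Proof.
have [a0 _] := inhA.
case: (@arg_maxP _ R A a0 predT (cc u) isT) => am _ Ham.
have Hm a : cc u a <= cc u am by exact: Ham.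
have pam1 : pref am <= 1.
  rewrite -pref1 (bigD1 am) //= lerDl sumr_ge0 // => i _; exact: ltW.
set lo := cc u am + pref am / eta.
set hi := cc u am + 1 / eta.
have lolt a : cc u a < lo.
  apply: (le_lt_trans (Hm a)); rewrite /lo ltrDl divr_gt0 //.
have lohi : lo <= hi by rewrite /lo /hi lerD2l ler_pM2r ?invr_gt0.
have cont : {within `[lo, hi], continuous (Fs u)}.
  apply: continuous_in_subspaceT => x; rewrite inE /= in_itv /= => /andP[h1 _].
  apply: Fs_cont => a; exact: (lt_le_trans (lolt a)).
have Flo : eta <= Fs u lo.
  rewrite /Fs (bigD1 am) //=.
  have -> : lo - cc u am = pref am / eta by rewrite /lo; ring.
  have -> : pref am / (pref am / eta) = eta.
    by rewrite invf_div mulrCA mulfV ?mulr1 // gt_eqF.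
  rewrite lerDl sumr_ge0 // => i _.
  by rewrite divr_ge0 ?ltW // subr_gt0.
have Fhi : Fs u hi <= eta.
  rewrite /Fs -[eta]mulr1 -pref1 mulr_sumr; apply: ler_sum => a _.
  have dpos : 0 < hi - cc u a by rewrite subr_gt0 (lt_le_trans (lolt a)).
  have hd : 1 <= eta * (hi - cc u a).
    have : eta^-1 <= hi - cc u a.
      by rewrite /hi; have := Hm a; lra.
    by move=> h; rewrite -(mulfV (lt0r_neq0 eta0)) ler_pM2l.
  rewrite ler_pdivrMr //.
  have := pref0 a; nra.
have [|l lin Fl] := @IVT R (Fs u) lo hi eta lohi cont.
  by rewrite ge_min Fhi orbT le_max Flo.
exists l; split => // a; move: lin; rewrite in_itv /= => /andP[h1 _].
exact: (lt_le_trans (lolt a)).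
Qed.

Definition lam u := projT1 (cid (ex_lam u)).
Lemma lam_gt u a : cc u a < lam u.
Proof. by have [] := projT2 (cid (ex_lam u)). Qed.
Lemma lam_F u : Fs u (lam u) = eta.
Proof. by have [] := projT2 (cid (ex_lam u)). Qed.

Definition D u a := lam u - cc u a.
Lemma D_gt0 u a : 0 < D u a.
Proof. by rewrite subr_gt0 lam_gt. Qed.
Lemma D_neq0 u a : D u a != 0.
Proof. exact: lt0r_neq0 (D_gt0 u a). Qed.

Definition W u z := \sum_a pref a / (D u a * D z a).
Definition N u z := \sum_a pref a * dl a / (D u a * D z a).
Definition Q u z := N u z / W u z.

Lemma W_gt0 u z : 0 < W u z.
Proof.
have [a0 _] := inhA.
rewrite /W (bigD1 a0) //= ltr_pwDl ?divr_gt0 ?mulr_gt0 ?D_gt0 //.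
by apply: sumr_ge0 => i _; rewrite divr_ge0 ?mulr_ge0 ?ltW ?D_gt0.
Qed.

Lemma lam_diff u z : lam z - lam u = Q u z * (z - u).
Proof.
have h0 : \sum_a (pref a / D z a - pref a / D u a) = 0.
  by rewrite sumrB; have := lam_F z; have := lam_F u; rewrite /Fs /D => -> ->; rewrite subrr.
have h1 : \sum_a (pref a / D z a - pref a / D u a) =
   (lam u - lam z) * W u z + (z - u) * N u z.
  rewrite /W /N !mulr_sumr -big_split /=; apply: eq_bigr => a _.
  have := D_neq0 u a; have := D_neq0 z a.
  have : D u a - D z a = lam u - lam z + (z - u) * dl a.
    by rewrite /D; have := ccE u z a; lra.
  move: (D u a) (D z a) => du dz e hz hu.
  have -> : lam u - lam z = du - dz - (z - u) * dl a by rewrite e; ring.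
  by field; rewrite hz hu.
have hW := W_gt0 u z.
rewrite /Q; apply: (mulIf (lt0r_neq0 hW)).
rewrite h1 in h0; rewrite mulrAC divfK ?lt0r_neq0 //.
have -> : (lam z - lam u) * W u z = - ((lam u - lam z) * W u z) by ring.
rewrite (_ : (lam u - lam z) * W u z = - ((z - u) * N u z)); first ring.
by apply/eqP; rewrite -addr_eq0 h0.
Qed.

Hypotheses (r01 : forall a, 0 <= r a <= 1) (rh01 : forall a, 0 <= rhat a <= 1).

Lemma dl_le1 a : `|dl a| <= 1.
Proof. have := r01 a; have := rh01 a; rewrite /dl => /andP[? ?] /andP[? ?].
rewrite ler_norml; apply/andP; split; lra. Qed.

Lemma Q_le1 u z : `|Q u z| <= 1.
Proof.
rewrite /Q normrM normrV ?unitfE ?lt0r_neq0 ?W_gt0 //.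
rewrite (gtr0_norm (W_gt0 u z)) ler_pdivrMr ?W_gt0 // mul1r /N /W.
apply: (le_trans (ler_norm_sum _ _ _)); apply: ler_sum => a _.
have hp : 0 < pref a / (D u a * D z a) by rewrite divr_gt0 ?mulr_gt0 ?D_gt0.
rewrite mulrAC normrM (gtr0_norm hp).
exact: ler_piMr (ltW hp) (dl_le1 a).
Qed.

Lemma lam_lip u z : `|lam z - lam u| <= `|z - u|.
Proof. rewrite lam_diff normrM; exact: ler_piMl (normr_ge0 _) (Q_le1 u z). Qed.

Lemma lam_cont u : {for u, continuous lam}.
Proof.
apply/cvgrPdist_lt => e e0.
exists e => // t /= h.
exact: le_lt_trans (lam_lip t u) h.
Qed.

Lemma cont_sum (F : A -> R -> R) x : (forall a, {for x, continuous (F a)}) ->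
  {for x, continuous (fun y => \sum_a F a y)}.
Proof.
move=> h; apply: (@cvg_big _ _ +%R 0 predT _ _ (nbhs x) _ F).
- exact: add_continuous.
- by move=> a _; exact: h.
Qed.

Lemma D_cont u a : {for u, continuous (fun z => D z a)}.
Proof.
rewrite /D /cc; apply: cvgB; first exact: lam_cont.
apply: cvgD; apply: cvgM; try exact: cvg_cst; try exact: cvg_id.
by apply: cvgB; [exact: cvg_cst | exact: cvg_id].
Qed.

Lemma Q_cont u : {for u, continuous (Q u)}.
Proof.
rewrite /Q /N /W; apply: cvgM.
  apply: cont_sum => a; apply: cvgM; first exact: cvg_cst.
  apply: cvgV; first by rewrite mulf_neq0 ?D_neq0.
  by apply: cvgM; [exact: cvg_cst | exact: D_cont].
apply: cvgV; first by rewrite lt0r_neq0 // -/(W u u) W_gt0.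
apply: cont_sum => a; apply: cvgM; first exact: cvg_cst.
apply: cvgV; first by rewrite mulf_neq0 ?D_neq0.
by apply: cvgM; [exact: cvg_cst | exact: D_cont].
Qed.

Lemma lam_deriv (u : R) : is_derive u (1:R) lam (Q u u).
Proof.
apply/is_derive1_caratheodory; exists (Q u); split => //.
- by move=> z; exact: lam_diff.
- exact: Q_cont.
Qed.

Definition pi u a := pref a / (eta * D u a).
Lemma pi_gt0 u a : 0 < pi u a.
Proof. by rewrite divr_gt0 ?mulr_gt0 ?D_gt0. Qed.
Lemma pi_sum u : \sum_a pi u a = 1.
Proof.
have := lam_F u; rewrite /Fs /pi -/(D u _) => h.
rewrite (eq_bigr (fun a => eta^-1 * (pref a / D u a))); last first.
  by move=> a _; rewrite invfM mulrCA.
by rewrite -mulr_sumr h mulVf ?lt0r_neq0.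
Qed.

Definition Jr u := \sum_a r a * pi u a - eta^-1 * \sum_a pref a * ln (pref a / pi u a).
Definition Jr2 u := \sum_a r a * pi u a - eta^-1 * \sum_a pref a * ln (eta * D u a).
Lemma Jr_alt u : Jr u = Jr2 u.
Proof.
rewrite /Jr /Jr2; congr (_ - _ * _); apply: eq_bigr => a _.
rewrite /pi invf_div mulrCA mulfV ?mulr1 //; exact: lt0r_neq0.
Qed.

Lemma is_derive_sumA (h : A -> R -> R) (x : R) (dh : A -> R) :
  (forall a, is_derive x (1:R) (h a) (dh a)) ->
  is_derive x (1:R) (fun y => \sum_a h a y) (\sum_a dh a).
Proof.
move=> H; rewrite -fct_sumE.
by elim/big_ind2 : _ => // [|] *; [exact: is_derive_cst|exact: is_deriveD].
Qed.

Lemma sE (c d : R) : c *: d = c * d. Proof. by []. Qed.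

Definition dpiv (x : R) a := pref a * (- (eta * D x a) ^- 2 * (eta * (Q x x - dl a))).
Definition dlnv (x : R) a := (eta * D x a)^-1 * (eta * (Q x x - dl a)).
Definition dJv (x : R) := \sum_a r a * dpiv x a - eta^-1 * \sum_a pref a * dlnv x a.

Section Deriv.
Variable x : R.

Lemma dD a : is_derive x (1:R) (fun y => D y a) (Q x x - dl a).
Proof.
have := lam_deriv x => hl.
rewrite /D /cc; apply: is_derive_eq.
by rewrite /dl !sE; ring.
Qed.

Lemma dEta a : is_derive x (1:R) (fun y => eta * D y a) (eta * (Q x x - dl a)).
Proof. have := dD a => h; apply: is_derive_eq. by rewrite !sE; ring. Qed.

Lemma dpi a : is_derive x (1:R) (fun y => pi y a) (dpiv x a).
Proof.
have h := @is_deriveV R (fun y => eta * D y a) x _ 1 (mulf_neq0 (lt0r_neq0 eta0) (D_neq0 x a)) (dEta a).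
rewrite /pi; apply: is_derive_eq.
by rewrite /dpiv !sE; ring.
Qed.

Lemma dln a : is_derive x (1:R) (fun y => ln (eta * D y a)) (dlnv x a).
Proof.
have hpos : 0 < eta * D x a by rewrite mulr_gt0 ?D_gt0.
have h := (@is_derive1_comp R (@ln R) (fun y => eta * D y a) x _ _ (is_derive1_ln hpos) (dEta a)).
exact h.
Qed.

Lemma dJ : is_derive x (1:R) Jr2 (dJv x).
Proof.
have h1 : is_derive x (1:R) (fun y => \sum_a r a * pi y a) (\sum_a r a * dpiv x a).
  apply: is_derive_sumA => a; have := dpi a => h; apply: is_derive_eq.
  by rewrite !sE; ring.
have h2 : is_derive x (1:R) (fun y => \sum_a pref a * ln (eta * D y a)) (\sum_a pref a * dlnv x a).
  apply: is_derive_sumA => a; have := dln a => h; apply: is_derive_eq.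
  by rewrite !sE; ring.
rewrite /Jr2; apply: is_derive_eq.
by rewrite /dJv !sE; ring.
Qed.
End Deriv.

Definition V u := \sum_a pref a * dl a ^+ 2 / (D u a * D u a).

Lemma sum3 (f g h : A -> R) c1 c2 c3 :
  \sum_a (c1 * f a + c2 * g a + c3 * h a) =
  c1 * \sum_a f a + c2 * \sum_a g a + c3 * \sum_a h a.
Proof. by rewrite !big_split /= -!mulr_sumr. Qed.

Lemma dJv_eq x : dJv x = - x / eta * (V x - N x x ^+ 2 / W x x).
Proof.
rewrite /dJv mulr_sumr -sumrB.
rewrite (eq_bigr (fun a =>
   (- (lam x * Q x x) / eta) * (pref a / (D x a * D x a)) +
   ((lam x + x * Q x x) / eta) * (pref a * dl a / (D x a * D x a)) +
   (- x / eta) * (pref a * dl a ^+ 2 / (D x a * D x a)))); last first.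
  move=> a _.
  have hr : r a = lam x - D x a - x * dl a by rewrite /D /cc /dl; ring.
  rewrite /dpiv /dlnv hr.
  have := D_neq0 x a; have := lt0r_neq0 eta0.
  move: (D x a) (Q x x) (lam x) => d q l hd he.
  by field; rewrite hd he.
rewrite sum3 -/(W x x) -/(N x x) -/(V x) /Q.
have := lt0r_neq0 (W_gt0 x x); have := lt0r_neq0 eta0.
move: (W x x) (N x x) (V x) (lam x) => w n v l he hw.
by field; rewrite he hw.
Qed.

Lemma exists_xi : exists2 c, 0 < c < 1 &
  Jr2 0 - Jr2 1 = (V c - N c c ^+ 2 / W c c) / (2 * eta).
Proof.
set G1 := Jr2 0 - Jr2 1.
pose H := fun u => (Jr2 0 - Jr2 u) - G1 * (u * u).
have dH u : is_derive u (1:R) H (- dJv u - G1 * (u + u)).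
  have := dJ u => h; rewrite /H; apply: is_derive_eq.
  by rewrite !sE; ring.
have cont : {within `[0, 1], continuous H}.
  apply: derivable_within_continuous => y _; by case: (dH y).
have [c cin hc] := @MVT R H (fun u => - dJv u - G1 * (u + u)) 0 1 ltr01
  (fun x _ => dH x) cont.
exists c; first by move: cin; rewrite in_itv.
have c0 : c != 0 by move: cin; rewrite in_itv /= => /andP[h _]; exact: lt0r_neq0.
move: hc; rewrite /H dJv_eq /G1.
move: (Jr2 0) (Jr2 1) (V c - N c c ^+ 2 / W c c) => j0 j1 b.
rewrite !subrr !mul1r !mul0r !subr0 => /eqP.
rewrite -subr_eq0 => /eqP h.
have h2 : c * (b / eta - 2 * (j0 - j1)) = 0.
  by rewrite -[RHS]oppr0 -h; ring.
move/eqP: h2; rewrite mulf_eq0 (negbTE c0) /= subr_eq0 => /eqP h3.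
have he := lt0r_neq0 eta0.
have hb : b = 2 * (j0 - j1) * eta by rewrite -h3 divfK.
by rewrite hb; field.
Qed.

Lemma ln_le {x : R} : 0 < x -> ln x <= x - 1.
Proof.
move=> x0; have := expR_ge1Dx (ln x); rewrite lnK ?posrE //; lra.
Qed.
Lemma ln_lt {x : R} : 0 < x -> x != 1 -> ln x < x - 1.
Proof.
move=> x0 x1; have : ln x != 0 by rewrite ln_eq0.
move=> /expR_gt1Dx; rewrite lnK ?posrE //; lra.
Qed.

Lemma lnD' {x y : R} : 0 < x -> 0 < y -> ln (x / y) = ln x - ln y.
Proof. by move=> hx hy; rewrite ln_div ?posrE. Qed.

Definition Jv (f p : A -> R) := \sum_a f a * p a - eta^-1 * \sum_a pref a * ln (pref a / p a).

Lemma J_fin f p : (forall a, 0 < p a) -> J pref eta f p = (Jv f p)%:E.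
Proof.
move=> hp; rewrite /J /KL.
have -> : [forall a, (0 < pref a) ==> (0 < p a)] by apply/forallP => a; apply/implyP.
by rewrite /Jv EFinB EFinM.
Qed.

Lemma J_inf f p : ~~ [forall a, (0 < pref a) ==> (0 < p a)] -> J pref eta f p = -oo%E.
Proof.
move=> h; rewrite /J /KL (negbTE h) gt0_muley ?lte_fin ?invr_gt0 //.
Qed.

Lemma gap u p : (forall a, 0 < p a) -> \sum_a p a = 1 ->
  Jv (cc u) (pi u) - Jv (cc u) p =
  eta^-1 * \sum_a pref a * (p a / pi u a - 1 - ln (p a / pi u a)).
Proof.
move=> hp hs.
have e1 a : ln (pref a / pi u a) - ln (pref a / p a) = ln (p a / pi u a).
  have hq := pi_gt0 u a; have hr := pref0 a; have hpa := hp a.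
  rewrite (lnD' hr hq) (lnD' hr hpa) (lnD' hpa hq); ring.
have e2 a : cc u a * (pi u a - p a) - eta^-1 * (pref a * (p a / pi u a - 1)) =
    lam u * pi u a - lam u * p a.
  have hc : cc u a = lam u - D u a by rewrite /D; ring.
  rewrite hc /pi; have := D_neq0 u a; have := lt0r_neq0 eta0;
  have := lt0r_neq0 (pref0 a).
  move: (D u a) => d hpr he hd; by field; rewrite hpr he hd.
have s1 : \sum_a cc u a * pi u a - \sum_a cc u a * p a =
    eta^-1 * \sum_a pref a * (p a / pi u a - 1).
  apply/eqP; rewrite -subr_eq0 -sumrB mulr_sumr -sumrB.
  rewrite (eq_bigr (fun a => lam u * pi u a - lam u * p a)).
    by rewrite sumrB -!mulr_sumr pi_sum hs subrr.
  by move=> a _; rewrite -e2 (mulrBr (cc u a)).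
have s2 : \sum_a pref a * ln (pref a / pi u a) - \sum_a pref a * ln (pref a / p a)
   = \sum_a pref a * ln (p a / pi u a).
  by rewrite -sumrB; apply: eq_bigr => a _; rewrite -mulrBr e1.
have s3 : \sum_a pref a * (p a / pi u a - 1 - ln (p a / pi u a)) =
   \sum_a pref a * (p a / pi u a - 1) - \sum_a pref a * ln (p a / pi u a).
  by rewrite -sumrB; apply: eq_bigr => a _; rewrite mulrBr.
rewrite /Jv s3.
move: s1 s2.
move: (\sum_a cc u a * pi u a) (\sum_a cc u a * p a) (\sum_a pref a * ln (pref a / pi u a))
  (\sum_a pref a * ln (pref a / p a)) (\sum_a pref a * (p a / pi u a - 1))
  (\sum_a pref a * ln (p a / pi u a)) => C1 C2 A1 B1 X L h1 h2.
have -> : C1 = C2 + eta^-1 * X by rewrite -h1; ring.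
have -> : A1 = B1 + L by rewrite -h2; ring.
ring.
Qed.

Lemma gap_ge0 u p : (forall a, 0 < p a) ->
  0 <= eta^-1 * \sum_a pref a * (p a / pi u a - 1 - ln (p a / pi u a)).
Proof.
move=> hp; apply: mulr_ge0; first by rewrite invr_ge0 ltW.
apply: sumr_ge0 => a _; apply: mulr_ge0; first exact: ltW.
have := ln_le (divr_gt0 (hp a) (pi_gt0 u a)); lra.
Qed.

Lemma pi_max u : is_maximizer pref eta (cc u) (pi u).
Proof.
split.
  by split; [move=> a; exact: ltW (pi_gt0 u a) | exact: pi_sum].
move=> p [p0 p1].
have [hall|hn] := boolP [forall a, (0 < pref a) ==> (0 < p a)]; last first.
  by rewrite J_inf // leNye.
have hp a : 0 < p a by move/forallP: hall => /(_ a); rewrite pref0.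
rewrite (J_fin _ _ hp) (J_fin _ _ (pi_gt0 u)) lee_fin -subr_ge0 gap //; exact: gap_ge0.
Qed.

Lemma pi_uniq u p : is_maximizer pref eta (cc u) p -> p = pi u.
Proof.
move=> [[p0 p1] hmax].
have := hmax (pi u) (proj1 (pi_max u)).
have [hall|hn] := boolP [forall a, (0 < pref a) ==> (0 < p a)]; last first.
  by rewrite (J_inf _ _ hn) (J_fin _ _ (pi_gt0 u)).
have hp a : 0 < p a by move/forallP: hall => /(_ a); rewrite pref0.
rewrite (J_fin _ _ hp) (J_fin _ _ (pi_gt0 u)) lee_fin -subr_ge0 => hle.
have := gap u p hp p1; have := gap_ge0 u p hp => hge hg.
have h0 : \sum_a pref a * (p a / pi u a - 1 - ln (p a / pi u a)) = 0.
  have : Jv (cc u) (pi u) - Jv (cc u) p = 0 by apply/eqP; rewrite eq_le hg hge; lra.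
  rewrite hg => /eqP; rewrite mulf_eq0 invr_eq0 (negbTE (lt0r_neq0 eta0)) /=.
  by move/eqP.
apply/funext => a.
have := psumr_eq0P _ h0 => /(_ _ a isT) /eqP.
rewrite mulf_eq0 (negbTE (lt0r_neq0 (pref0 a))) /=.
have hx : 0 < p a / pi u a by rewrite divr_gt0 ?pi_gt0.
have [e|ne] := eqVneq (p a / pi u a) 1.
  by move=> _; rewrite -(divfK (lt0r_neq0 (pi_gt0 u a)) (p a)) e mul1r.
have nn : forall i : A, true -> 0 <= pref i * (p i / pi u i - 1 - ln (p i / pi u i)).
  move=> i _; apply: mulr_ge0; first exact: ltW.
  have := ln_le (divr_gt0 (hp i) (pi_gt0 u i)); lra.
move=> /(_ nn) /eqP h; have := ln_lt hx ne; lra.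
Qed.

Lemma main_sec (pistar pihat : A -> R) :
  is_maximizer pref eta r pistar ->
  is_maximizer pref eta rhat pihat ->
  exists u : R, 0 <= u <= 1 /\
  exists pu : A -> R,
    is_maximizer pref eta (fun a => (1 - u) * r a + u * rhat a) pu /\
    (J pref eta r pistar - J pref eta r pihat =
      (eta / 2 * (\sum_a pu a * (pu a / pref a * (r a - rhat a) ^+ 2)
        - (\sum_a pu a ^+ 2 / pref a * (r a - rhat a)) ^+ 2
          / (\sum_a pu a ^+ 2 / pref a)))%:E)%E /\
    (J pref eta r pistar - J pref eta r pihat <=
      (eta / 2 * (\sum_a pu a * (pu a / pref a * (r a - rhat a) ^+ 2)))%:E)%E.
Proof.
move=> hstar hhat.
have c0 : cc 0 = r by apply/funext => a; rewrite /cc; ring.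
have c1 : cc 1 = rhat by apply/funext => a; rewrite /cc; ring.
have ehat : pihat = pi 1 by apply: pi_uniq; rewrite c1.
have estar : J pref eta r pistar = J pref eta r (pi 0).
  apply/le_anti/andP; split.
  - have := (pi_max 0).2 pistar hstar.1; by rewrite c0.
  - by apply: hstar.2; have := (pi_max 0).1.
have Jpi u : J pref eta r (pi u) = (Jr2 u)%:E.
  by rewrite (J_fin _ _ (pi_gt0 u)) -Jr_alt.
have [c /andP[cg0 cl1] hc] := exists_xi.
exists c; split; first by rewrite !ltW.
exists (pi c); split; first exact: pi_max c.
have S1 : \sum_a pi c a * (pi c a / pref a * (r a - rhat a) ^+ 2) = eta^-2 * V c.
  rewrite /V mulr_sumr; apply: eq_bigr => a _.
  have := D_neq0 c a; have := lt0r_neq0 eta0; have := lt0r_neq0 (pref0 a).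
  rewrite /pi /dl; move: (D c a) => d hp he hd; by field; rewrite hp he hd.
have S2 : \sum_a pi c a ^+ 2 / pref a * (r a - rhat a) = - (eta^-2 * N c c).
  rewrite /N mulr_sumr -sumrN; apply: eq_bigr => a _.
  have := D_neq0 c a; have := lt0r_neq0 eta0; have := lt0r_neq0 (pref0 a).
  rewrite /pi /dl; move: (D c a) => d hp he hd; by field; rewrite hp he hd.
have S3 : \sum_a pi c a ^+ 2 / pref a = eta^-2 * W c c.
  rewrite /W mulr_sumr; apply: eq_bigr => a _.
  have := D_neq0 c a; have := lt0r_neq0 eta0; have := lt0r_neq0 (pref0 a).
  rewrite /pi; move: (D c a) => d hp he hd; by field; rewrite hp he hd.
have eq1 : (J pref eta r pistar - J pref eta r pihat =
    (eta / 2 * (\sum_a pi c a * (pi c a / pref a * (r a - rhat a) ^+ 2)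
        - (\sum_a pi c a ^+ 2 / pref a * (r a - rhat a)) ^+ 2
          / (\sum_a pi c a ^+ 2 / pref a)))%:E)%E.
  rewrite estar ehat !Jpi -EFinB hc S1 S2 S3; congr (_%:E).
  have := lt0r_neq0 (W_gt0 c c); have := lt0r_neq0 eta0.
  move: (V c) (N c c) (W c c) => v n w he hw; by field; rewrite he hw.
split => //.
rewrite eq1 lee_fin.
have t0 : 0 <= (\sum_a pi c a ^+ 2 / pref a * (r a - rhat a)) ^+ 2
          / (\sum_a pi c a ^+ 2 / pref a).
  apply: divr_ge0; first exact: sqr_ge0.
  by apply: sumr_ge0 => a _; rewrite divr_ge0 ?sqr_ge0 ?ltW.
have e2 : 0 <= eta / 2 by rewrite divr_ge0 ?ltW.
move: t0 e2; move: (_ / (\sum_a pi c a ^+ 2 / pref a)) (eta / 2) => t e t0 e0.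
by rewrite mulrBr lerBlDr lerDl mulr_ge0.
Qed.
End S.

Theorem lemma5p2 (R : realType) (A : finType) (r rhat pref pistar pihat : A -> R)
  (eta : R) :
  (forall a, 0 <= r a <= 1) -> (forall a, 0 <= rhat a <= 1) ->
  0 < eta -> simplex pref -> (forall a, 0 < pref a) ->
  is_maximizer pref eta r pistar ->
  is_maximizer pref eta rhat pihat ->
  exists u : R, 0 <= u <= 1 /\
  exists pu : A -> R,
    is_maximizer pref eta (fun a => (1 - u) * r a + u * rhat a) pu /\
    (J pref eta r pistar - J pref eta r pihat =
      (eta / 2 * (\sum_a pu a * (pu a / pref a * (r a - rhat a) ^+ 2)
        - (\sum_a pu a ^+ 2 / pref a * (r a - rhat a)) ^+ 2
          / (\sum_a pu a ^+ 2 / pref a)))%:E)%E /\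
    (J pref eta r pistar - J pref eta r pihat <=
      (eta / 2 * (\sum_a pu a * (pu a / pref a * (r a - rhat a) ^+ 2)))%:E)%E.
Proof.
move=> r01 rh01 eta0 [_ pref1] pref0 hstar hhat.
exact: (main_sec _ _ _ _ _ _ eta0 pref0 pref1 r01 rh01 _ _ hstar hhat).
Qed.
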